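(* Let $m\ge 1$ and $k\ge 2$. The coefficients $a_{k,l,r}$ satisfy, for all integers $l\ge 0$, $$a_{k,l,r}=a_{k-1,l-1,r+1}-(m-r-1)\,a_{k,l,r+1}\qquad(0\le r\le m-1),$$ $$a_{k,l,m}=a_{k-1,l,0}-m\,a_{k,l+1,0}.$$
   Context: Falling factorials are $(y)^{\underline 0}=1$ and $(y)^{\underline j}=y(y-1)\cdots(y-j+1)$. For $k\ge1$ let $q_k=\lfloor mk/(m+1)\rfloor$. The reals $a_{k,0,m}$ and $a_{k,l,r}$ ($1\le l\le q_k$, $0\le r\le m$) are the unique coefficients with $$\big((x-1)^{\underline m}\big)^k=a_{k,0,m}(x-1)^{\underline m}+\sum_{l=1}^{q_k}\sum_{r=0}^m a_{k,l,r}\big((x)^{\underline{m+1}}\big)^l(x+r-m-1)^{\underline r}$$ in $\mathbb{R}[x]$. By convention, $a_{k,l,r}=0$ for all index triples not covered by this expansion, namely when $l<0$, when $l>q_k$, or when $l=0$ and $r\neq m$. *)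

(* Defs.v *)
From mathcomp Require Import all_boot all_order all_algebra.
From mathcomp Require Import reals.
Set Implicit Arguments. Unset Strict Implicit. Unset Printing Implicit Defensive.
Import Order.TTheory GRing.Theory Num.Theory.
Local Open Scope ring_scope.

Definition ffall (R : ringType) (p : {poly R}) (j : nat) : {poly R} :=
  \prod_(i < j) (p - (i%:R)%:P).

Definition qk (m k : nat) : nat := (m * k) %/ m.+1.

(* a : int -> nat -> R is the coefficient family a_{k,l,r} (l may be negative).
   [is_coef_family m k a] says: a satisfies the zero conventions outside the
   index range of the expansion, and the expansion identity holds in R[x]. *)
Definition is_coef_family (R : realType) (m k : nat) (a : int -> nat -> R) : Prop :=
  [/\ (forall (l : int) r, l < 0 -> a l r = 0),
      (forall (l : nat) r, (qk m k < l)%N -> a l%:Z r = 0),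
      (forall r, r != m -> a 0 r = 0),
      (forall (l : int) r, (m < r)%N -> a l r = 0) &
      ffall ('X - 1) m ^+ k =
        (a 0 m)%:P * ffall ('X - 1) m
        + \sum_(1 <= l < (qk m k).+1) \sum_(r < m.+1)
            (a l%:Z r)%:P * (ffall 'X m.+1) ^+ l
              * ffall ('X + (r%:R)%:P - (m.+1%:R)%:P) r].

(* Main.v *)
Require Import Defs.
From mathcomp Require Import all_boot all_order all_algebra.
From mathcomp Require Import reals.
From mathcomp Require Import ring zify.
Import Order.TTheory GRing.Theory Num.Theory.
Local Open Scope ring_scope.

Section Aux.
Variable R : realType.
Variable m : nat.

Definition PP : {poly R} := ffall ('X - 1) m.
Definition FF : {poly R} := ffall 'X m.+1.
Definition GG (r : nat) : {poly R} := ffall ('X + (r%:R)%:P - (m.+1%:R)%:P) r.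
Definition row (c : nat -> R) := \sum_(r < m.+1) (c r)%:P * GG r.
Definition SS (c : nat -> nat -> R) L := \sum_(l < L) FF ^+ l * row (c l).

Lemma ffallC (c : R) j : ffall ('X + c%:P) j = \prod_(i < j) ('X - (i%:R - c)%:P).
Proof. by apply: eq_bigr => i _; ring. Qed.

Lemma ffall_monic (c : R) j : ffall ('X + c%:P) j \is monic.
Proof. by rewrite ffallC monic_prod_XsubC. Qed.

Lemma ffall_size (c : R) j : size (ffall ('X + c%:P) j) = j.+1.
Proof. by rewrite ffallC size_prod_XsubC /index_enum; unlock; rewrite -enumT size_enum_ord. Qed.

Lemma PPe : PP = ffall ('X + (-1)%:P) m.
Proof. by rewrite /PP polyCN polyC1. Qed.
Lemma FFe : FF = ffall ('X + 0%:P) m.+1.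
Proof. by rewrite /FF addr0. Qed.
Lemma GGe r : GG r = ffall ('X + (r%:R - m.+1%:R)%:P) r.
Proof. by rewrite /GG polyCB addrA. Qed.

Lemma GS r : GG r.+1 = ('X - (m%:R - r%:R)%:P) * GG r.
Proof.
rewrite /GG /ffall big_ord_recl; congr (_ * _); first by rewrite [nat_of_ord _]/=; ring.
by apply: eq_bigr => i _; rewrite lift0; ring.
Qed.

Lemma Gm : GG m = PP.
Proof. by rewrite /GG /PP /ffall; apply: eq_bigr => i _; ring. Qed.

Lemma G0 : GG 0 = 1.
Proof. by rewrite /GG /ffall big_ord0. Qed.

Lemma FP : FF = 'X * PP.
Proof.
rewrite /FF /PP /ffall big_ord_recl; congr (_ * _); first by rewrite [nat_of_ord _]/=; ring.
by apply: eq_bigr => i _; rewrite lift0; ring.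
Qed.

Lemma key l r : PP * (FF ^+ l * (GG r.+1 + (m%:R - r%:R)%:P * GG r)) = FF ^+ l.+1 * GG r.
Proof. rewrite GS FP exprS; ring. Qed.


Definition bb (al : nat -> nat -> R) l s :=
  (if s is j.+1 then al l.+1 j else al l m) + (m%:R - s%:R) * al l.+1 s.

Lemma rowb (al : nat -> nat -> R) l :
  PP * (FF ^+ l * row (bb al l)) =
  FF ^+ l * ((al l m)%:P * GG m) + FF ^+ l.+1 * \sum_(r < m) (al l.+1 r)%:P * GG r.
Proof.
have E1 : row (bb al l) = (al l m)%:P +
   \sum_(i < m) (al l.+1 i)%:P * (GG i.+1 + (m%:R - i%:R)%:P * GG i).
  rewrite /row /bb.
  under eq_bigr do rewrite rmorphD mulrDl.
  rewrite big_split /= big_ord_recl big_ord_recr /= subrr mul0r rmorph0 mul0r addr0.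
  rewrite G0 mulr1 -addrA; congr (_ + _).
  rewrite -big_split /=; apply: eq_bigr => i _.
  rewrite add0n /bump leq0n add1n rmorphM /=; ring.
rewrite E1 !mulrDr mulr_sumr mulr_sumr Gm; congr (_ + _); first by ring.
rewrite mulr_sumr; apply: eq_bigr => i _.
by rewrite [RHS]mulrCA -key; ring.
Qed.

Lemma row0 (c : nat -> R) : (forall r, c r = 0) -> row c = 0.
Proof. by move=> H; rewrite /row big1 // => i _; rewrite H rmorph0 mul0r. Qed.

Lemma rowsplit (c : nat -> R) :
  row c = \sum_(r < m) (c r)%:P * GG r + (c m)%:P * GG m.
Proof. by rewrite /row big_ord_recr. Qed.

Lemma SSb (al : nat -> nat -> R) L :
  (forall r, (r < m)%N -> al 0%N r = 0) -> (forall r, al L r = 0) ->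
  PP * SS (bb al) L = SS al L.+1.
Proof.
move=> H0 HL.
rewrite /SS mulr_sumr.
under eq_bigr do rewrite rowb.
rewrite big_split /=.
under [in RHS]eq_bigr do rewrite rowsplit mulrDr.
have A : \sum_(i < L.+1) FF ^+ i * \sum_(r < m) (al i r)%:P * GG r =
          \sum_(i < L) FF ^+ i.+1 * \sum_(r < m) (al i.+1 r)%:P * GG r.
  rewrite big_ord_recl /= big1 ?mulr0 ?add0r; last first.
    by move=> i _; rewrite H0 // rmorph0 mul0r.
  by apply: eq_bigr => i _; rewrite /bump /= ?add1n ?add0n.
have B : \sum_(i < L.+1) FF ^+ i * ((al i m)%:P * GG m) =
          \sum_(i < L) FF ^+ i * ((al i m)%:P * GG m).
  by rewrite big_ord_recr /= HL rmorph0 mul0r mulr0 addr0.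
by rewrite big_split /= A B addrC.
Qed.


Lemma FF_monic : FF \is monic. Proof. by rewrite FFe ffall_monic. Qed.
Lemma FF_size : size FF = m.+2. Proof. by rewrite FFe ffall_size. Qed.
Lemma GG_monic r : GG r \is monic. Proof. by rewrite GGe ffall_monic. Qed.
Lemma GG_size r : size (GG r) = r.+1. Proof. by rewrite GGe ffall_size. Qed.
Lemma PP_monic : PP \is monic. Proof. by rewrite PPe ffall_monic. Qed.

Lemma FFX_size q : size (FF ^+ q) = (q * m.+1).+1.
Proof.
elim: q => [|q IH]; first by rewrite expr0 size_poly1.
rewrite exprS size_monicM ?FF_monic ?monic_neq0 ?monic_exp ?FF_monic // IH FF_size.
rewrite mulSn; lia.
Qed.

Lemma h_monic q r : FF ^+ q * GG r \is monic.
Proof. by rewrite monicMl ?monic_exp ?FF_monic ?GG_monic. Qed.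

Lemma h_size q r : size (FF ^+ q * GG r) = (q * m.+1 + r).+1.
Proof.
rewrite size_monicM ?monic_exp ?FF_monic ?monic_neq0 ?GG_monic //.
rewrite FFX_size GG_size; lia.
Qed.

Lemma indep (c : nat -> R) (h : nat -> {poly R}) N :
  (forall n, size (h n) = n.+1) -> (forall n, lead_coef (h n) = 1) ->
  \sum_(n < N) (c n)%:P * h n = 0 -> forall n, (n < N)%N -> c n = 0.
Proof.
move=> Hs Hl; elim: N => [|N IH] Hsum n ltn; first by [].
rewrite big_ord_recr /= in Hsum.
have cN : c N = 0.
  have := congr1 (fun p : {poly R} => p`_N) Hsum.
  rewrite coefD coef_sum big1 ?add0r; last first.
    move=> i _; rewrite coefCM nth_default ?mulr0 // Hs; exact: ltn_ord.
  rewrite coefCM.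
  have -> : (h N)`_N = 1 by rewrite -(Hl N) /lead_coef Hs.
  by rewrite mulr1 coef0.
rewrite cN rmorph0 mul0r addr0 in Hsum.
move: ltn; rewrite ltnS leq_eqVlt => /orP [/eqP -> //| ltn].
exact: IH.
Qed.

Lemma sum_pair (f : nat -> nat -> {poly R}) L M : (0 < M)%N ->
  \sum_(l < L) \sum_(r < M) f l r = \sum_(n < L * M) f (n %/ M)%N (n %% M)%N.
Proof.
move=> M0; elim: L => [|L IH]; first by rewrite mul0n !big_ord0.
rewrite big_ord_recr /= IH.
rewrite [in RHS]mulSn [in RHS]addnC big_split_ord /=; congr (_ + _).
apply: eq_bigr => i _.
by rewrite divnMDl // divn_small // addn0 modnMDl modn_small.
Qed.

Lemma SS_indep d L : SS d L = 0 ->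
  forall l r, (l < L)%N -> (r <= m)%N -> d l r = 0.
Proof.
move=> H l r lL rm.
have E : SS d L = \sum_(n < L * m.+1)
   (d (n %/ m.+1)%N (n %% m.+1)%N)%:P * (FF ^+ (n %/ m.+1)%N * GG (n %% m.+1)%N).
  rewrite -(sum_pair (fun l r => (d l r)%:P * (FF ^+ l * GG r))) //.
  apply: eq_bigr => i _; rewrite /row mulr_sumr.
  by apply: eq_bigr => j _; rewrite mulrCA.
rewrite E in H.
have := indep (fun n => d (n %/ m.+1)%N (n %% m.+1)%N)
   (fun n => FF ^+ (n %/ m.+1)%N * GG (n %% m.+1)%N) _ _ _ H (l * m.+1 + r)%N.
rewrite divnMDl // divn_small // addn0 modnMDl modn_small //; apply.
- by move=> n; rewrite h_size -divn_eq.
- by move=> n; apply/monicP/h_monic.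
- nia.
Qed.

Lemma SSB c1 c2 L : SS c1 L - SS c2 L = SS (fun l r => c1 l r - c2 l r) L.
Proof.
rewrite /SS -sumrB; apply: eq_bigr => i _.
rewrite -mulrBr /row -sumrB; congr (_ * _); apply: eq_bigr => j _.
by rewrite rmorphB mulrBl.
Qed.

Lemma SS_ext c n d : (forall l r, (n <= l)%N -> c l r = 0) -> SS c (n + d) = SS c n.
Proof.
move=> H; elim: d => [|d IH]; first by rewrite addn0.
rewrite addnS /SS big_ord_recr /= -/(SS c (n + d)) IH row0 ?mulr0 ?addr0 //.
by move=> r; apply: H; exact: leq_addr.
Qed.


Lemma SS_fam k (a : int -> nat -> R) : is_coef_family m k a ->
  forall L, (qk m k < L)%N -> PP ^+ k = SS (fun l r => a (Posz l) r) L.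
Proof.
case=> Hneg Hbig H0 Hr He L HL.
have Hq : SS (fun l r => a (Posz l) r) (qk m k).+1 = PP ^+ k.
  rewrite /PP He /SS big_ord_recl expr0 mul1r.
  congr (_ + _).
    rewrite rowsplit big1 ?add0r ?Gm //.
    by move=> i _; rewrite H0 ?rmorph0 ?mul0r // neq_ltn ltn_ord.
  rewrite big_add1 /= big_mkord; apply: eq_bigr => i _.
  rewrite /row mulr_sumr; apply: eq_bigr => j _.
  rewrite /bump /= ?add1n /GG; ring.
rewrite -Hq -(subnKC HL) SS_ext //.
Qed.

End Aux.

Theorem lemma7p2 (R : realType) (m k : nat) (a b : int -> nat -> R) :
  (1 <= m)%N -> (2 <= k)%N ->
  is_coef_family m k a -> is_coef_family m k.-1 b ->
  forall l : int, 0 <= l ->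
    (forall r : nat, (r <= m - 1)%N ->
        a l r = b (l - 1) r.+1 - (m - r - 1)%:R * a l r.+1)
    /\ a l m = b l 0%N - m%:R * a (l + 1) 0%N.
Proof.
move=> m1 k2 Ha Hb l l0.
have Hc : forall n s, (s <= m)%N ->
    b (Posz n) s = bb R m (fun l r => a (Posz l) r) n s.
  move=> n s sm.
  have qq : (qk m k.-1 <= qk m k)%N.
    by rewrite /qk leq_div2r // leq_mul2l leq_pred orbT.
  set L := (n + qk m k).+1.
  have E1 : PP R m ^+ k = SS R m (fun l r => a (Posz l) r) L.+1.
    by apply: SS_fam => //; rewrite /L; lia.
  have E2 : PP R m ^+ k.-1 = SS R m (fun l r => b (Posz l) r) L.
    by apply: SS_fam => //; rewrite /L; lia.
  have E3 : PP R m * SS R m (bb R m (fun l r => a (Posz l) r)) L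
          = SS R m (fun l r => a (Posz l) r) L.+1.
    apply: (@SSb R m).
      move=> r rm; case: Ha => _ _ H0 _ _; apply: H0; by rewrite neq_ltn rm.
    move=> r; case: Ha => _ Hbig _ _ _; apply: Hbig; rewrite /L; lia.
  have E4 : SS R m (fun l r => b (Posz l) r) L = SS R m (bb R m (fun l r => a (Posz l) r)) L.
    apply: (mulfI (monic_neq0 (PP_monic R m))).
    by rewrite E3 -E1 -E2 -exprS prednK //; lia.
  have := @SS_indep R m _ L (_ : SS R m (fun l r => b (Posz l) r - bb R m (fun l r => a (Posz l) r) l r) L = 0) n s.
  move=> H; apply/eqP; rewrite -subr_eq0; apply/eqP; apply: H => //.
    by rewrite -(@SSB R m) E4 subrr.
  rewrite /L; lia.
case: l l0 => [n|n] // _; split.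
  move=> r rm.
  case: n => [|n].
    case: Ha => _ _ H0 _ _; case: Hb => Hneg _ _ _ _.
    rewrite H0 ?neq_ltn; last by apply/orP; left; lia.
    rewrite Hneg //.
    case: (eqVneq r.+1 m) => [<-|ne]; first by rewrite subSnn subnn mul0r subr0.
    by rewrite H0 // mulr0 subr0.
  have -> : (Posz n.+1 - 1) = Posz n by rewrite -[n.+1]addn1 PoszD addrK.
  rewrite Hc; last by lia.
  rewrite /bb -subnDA addn1 natrB; last by lia.
  ring.
have -> : (Posz n + 1) = Posz n.+1 by rewrite -[n.+1]addn1 PoszD.
rewrite Hc // /bb /= subr0; ring.
Qed.
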